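(* Let $C$ and $D$ be nonempty convex subsets of a real topological vector space $X$ such that $\operatorname{icr}(C\cap D)=\operatorname{fri}(C\cap D)$. Then: (i) if $C\cap\operatorname{fri} D\neq\emptyset$, then $\operatorname{fri}(C\cap D)\subseteq C\cap\operatorname{fri} D$; (ii) if $\operatorname{fri} C\cap\operatorname{fri} D\neq\emptyset$, then $\operatorname{fri}(C\cap D)\subseteq\operatorname{fri} C\cap\operatorname{fri} D$.
   Context: For a convex set $C$, a convex subset $F\subseteq C$ is a face of $C$ if for every $x\in F$ and all $y,z\in C$ with $x\in(y,z)=\{(1-t)y+tz:t\in(0,1)\}$ we have $y,z\in F$; $F_{\min}(x,C)$ is the intersection of all faces of $C$ containing $x\in C$. The intrinsic core is $\operatorname{icr} C=\{x\in C:\forall y\in C\ \exists z\in C,\ x\in(y,z)\}$ and the face relative interior is $\operatorname{fri} C=\{x\in C: C\subseteq\overline{F_{\min}(x,C)}\}$. *)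

(* Defs.v *)
From HB Require Import structures.
From mathcomp Require Import all_boot all_order all_algebra.
From mathcomp Require Import all_classical all_reals topology normedtype tvs.
Set Implicit Arguments. Unset Strict Implicit. Unset Printing Implicit Defensive.
Import Order.TTheory GRing.Theory Num.Theory.
Local Open Scope classical_set_scope.
Local Open Scope ring_scope.

Section ConvexDefs.
Variables (R : realType) (X : topologicalLmodType R).

Definition convex_set (C : set X) : Prop :=
  forall x y t, C x -> C y -> 0 <= t <= 1 -> C ((1 - t) *: x + t *: y).

Definition in_open_seg (x y z : X) : Prop :=
  exists t : R, 0 < t < 1 /\ x = (1 - t) *: y + t *: z.

Definition is_face (F C : set X) : Prop :=
  convex_set F /\ F `<=` C /\
  forall x y z, F x -> C y -> C z -> in_open_seg x y z -> F y /\ F z.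

Definition Fmin (x : X) (C : set X) : set X :=
  [set y | forall F, is_face F C -> F x -> F y].

Definition icr (C : set X) : set X :=
  [set x | C x /\ forall y, C y -> exists z, C z /\ in_open_seg x y z].

Definition fri (C : set X) : set X :=
  [set x | C x /\ C `<=` closure (Fmin x C)].

End ConvexDefs.

(* Main.v *)
Require Import Defs.
From HB Require Import structures.
From mathcomp Require Import all_boot all_order all_algebra.
From mathcomp Require Import all_classical all_reals topology normedtype tvs.
Local Open Scope classical_set_scope.

Lemma key_fri (R : realType) (X : topologicalLmodType R) (K E : set X) (x y : X) :
  icr K x -> K `<=` E -> K y -> fri E y -> fri E x.
Proof.
move=> [Kx Hx] KE Ky [Ey HEy]; split; first exact: KE.
apply: (subset_trans HEy); apply: closureS => w Hw F HF Fx.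
apply: Hw => //.
have [z [Kz Hz]] := Hx y Ky.
case: HF => _ [_ HF].
by have [] := HF x y z Fx Ey (KE _ Kz) Hz.
Qed.

Theorem proposition4p6 (R : realType) (X : topologicalLmodType R) (C D : set X) :
  convex_set C -> convex_set D -> C !=set0 -> D !=set0 ->
  icr (C `&` D) = fri (C `&` D) ->
  (C `&` fri D !=set0 -> fri (C `&` D) `<=` C `&` fri D) /\
  (fri C `&` fri D !=set0 -> fri (C `&` D) `<=` fri C `&` fri D).
Proof.
move=> _ _ _ _ E.
have sC : C `&` D `<=` C by move=> ? [].
have sD : C `&` D `<=` D by move=> ? [].
split.
- move=> [y [Cy Dy]] x; rewrite -E => Hx.
  have CDy : (C `&` D) y by split => //; case: Dy.
  split; first by case: Hx => -[].
  exact: (@key_fri _ _ _ D _ y Hx sD CDy Dy).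
- move=> [y [Cy Dy]] x; rewrite -E => Hx.
  have CDy : (C `&` D) y by split; [case: Cy | case: Dy].
  split.
  + exact: (@key_fri _ _ _ C _ y Hx sC CDy Cy).
  + exact: (@key_fri _ _ _ D _ y Hx sD CDy Dy).
Qed.
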